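(* Let $\mathcal{H}=(\mathbb{C}^3)^{\otimes 3}$ with computational basis $|abc\rangle=|a\rangle\otimes|b\rangle\otimes|c\rangle$, $a,b,c\in\{0,1,2\}$. Let $E_3=\mathrm{diag}(1,-1,0)$, $\mathcal{L}oc=\{\, i(L\otimes \mathbf{1}\otimes \mathbf{1}+\mathbf{1}\otimes L\otimes \mathbf{1}+\mathbf{1}\otimes\mathbf{1}\otimes L) : L \text{ traceless Hermitian } 3\times 3\,\}$, $H=E_3\otimes E_3\otimes \mathbf{1}+E_3\otimes \mathbf{1}\otimes E_3+\mathbf{1}\otimes E_3\otimes E_3$, and let $\mathcal{L}$ be the real Lie algebra generated by $\mathcal{L}oc$ and $iH$. Let $V$ be the $8$-dimensional subspace spanned by $2|001\rangle-|100\rangle-|010\rangle$, $-2|110\rangle+|101\rangle+|011\rangle$, $2|002\rangle-|200\rangle-|020\rangle$, $2|102\rangle+2|012\rangle-|120\rangle-|210\rangle-|201\rangle-|021\rangle$, $2|112\rangle-|121\rangle-|211\rangle$, $|021\rangle-|120\rangle+|201\rangle-|210\rangle$, $-2|220\rangle+|022\rangle+|202\rangle$, $|122\rangle+|212\rangle-2|221\rangle$ (a copy of the adjoint representation, highest weight $(2,1,0)$, of $su(3)$, invariant under $\mathcal L$). Then for every traceless skew-Hermitian operator $X$ on $V$ there exists $Y\in\mathcal L$ whose restriction to $V$ equals $X$; i.e., $\mathcal L$ restricted to $V$ contains all of $su(8)$. *)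

(* Defs.v *)
From HB Require Import structures.
From mathcomp Require Import all_boot all_order all_algebra.
From mathcomp Require Import reals.
From mathcomp Require Import complex mxtens.
Set Implicit Arguments. Unset Strict Implicit. Unset Printing Implicit Defensive.
Import Order.TTheory GRing.Theory Num.Theory.
Local Open Scope ring_scope.

Section Defs.
Variable R : realType.
Local Notation C := (R[i]).

Definition adjmx m n (A : 'M[C]_(m, n)) : 'M[C]_(n, m) := (map_mx Num.conj A)^T.

Definition I3 : 'M[C]_3 := 1%:M.
Definition E3 : 'M[C]_3 := diag_mx (\row_(i < 3) [:: 1; -1; 0]`_i).

(* L (x) 1 (x) 1 + 1 (x) L (x) 1 + 1 (x) 1 (x) L on (C^3)^{(x)3};
   tensmx uses the index ordering |abc> <-> (3a+b)*3+c *)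
Definition loc_sum (L : 'M[C]_3) : 'M[C]_27 :=
  L *t I3 *t I3 + I3 *t L *t I3 + I3 *t I3 *t L.

Definition Hint : 'M[C]_27 := E3 *t E3 *t I3 + E3 *t I3 *t E3 + I3 *t E3 *t E3.

Definition Loc (Y : 'M[C]_27) : Prop :=
  exists L : 'M[C]_3, adjmx L = L /\ \tr L = 0 /\ Y = 'i *: loc_sum L.

Definition gens (Y : 'M[C]_27) : Prop := Loc Y \/ Y = 'i *: Hint.

Inductive lie_gen (S : 'M[C]_27 -> Prop) : 'M[C]_27 -> Prop :=
| lie_base Y : S Y -> lie_gen S Y
| lie_add Y Z : lie_gen S Y -> lie_gen S Z -> lie_gen S (Y + Z)
| lie_scale (c : C) Y : c \is Num.real -> lie_gen S Y -> lie_gen S (c *: Y)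
| lie_bracket Y Z : lie_gen S Y -> lie_gen S Z -> lie_gen S (Y *m Z - Z *m Y).

Definition Lalg : 'M[C]_27 -> Prop := lie_gen gens.

Definition e3 (a : 'I_3) : 'cV[C]_3 := delta_mx a 0.
Definition ket (a b c : 'I_3) : 'cV[C]_27 := e3 a *t e3 b *t e3 c.
Definition k (a b c : nat) : 'cV[C]_27 := ket (inord a) (inord b) (inord c).

Definition Vlist : seq 'cV[C]_27 := [::
  2 *: k 0 0 1 - k 1 0 0 - k 0 1 0;
  - (2 *: k 1 1 0) + k 1 0 1 + k 0 1 1;
  2 *: k 0 0 2 - k 2 0 0 - k 0 2 0;
  2 *: k 1 0 2 + 2 *: k 0 1 2 - k 1 2 0 - k 2 1 0 - k 2 0 1 - k 0 2 1;
  2 *: k 1 1 2 - k 1 2 1 - k 2 1 1;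
  k 0 2 1 - k 1 2 0 + k 2 0 1 - k 2 1 0;
  - (2 *: k 2 2 0) + k 0 2 2 + k 2 0 2;
  k 1 2 2 + k 2 1 2 - 2 *: k 2 2 1 ].

Definition Vrows : 'M[C]_(8, 27) := \matrix_(i < 8, j < 27) (Vlist`_i) j 0.

Definition inV (v : 'cV[C]_27) : Prop := (v^T <= Vrows)%MS.

Definition orthV (w : 'cV[C]_27) : Prop :=
  forall v, inV v -> adjmx v *m w = 0.

End Defs.

(* Main.v *)
From Stdlib Require Import ZArith.
Require Import Defs.
From HB Require Import structures.
From mathcomp Require Import all_boot all_order all_algebra.
From mathcomp Require Import reals.
From mathcomp Require Import complex mxtens.
From mathcomp Require Import ssrZ.
Import ssrZ.Instances.
From mathcomp Require Import ring zify.
Import Order.TTheory GRing.Theory Num.Theory.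
Local Open Scope ring_scope.

Definition gz := (Z * Z)%type.
Definition gadd (x y : gz) : gz := (Z.add x.1 y.1, Z.add x.2 y.2).
Definition gmul (x y : gz) : gz :=
  (Z.sub (Z.mul x.1 y.1) (Z.mul x.2 y.2), Z.add (Z.mul x.1 y.2) (Z.mul x.2 y.1)).
Definition gopp (x : gz) : gz := (Z.opp x.1, Z.opp x.2).
Definition gconj (x : gz) : gz := (x.1, Z.opp x.2).
Definition g0 : gz := (Z0, Z0).
Definition lmx := seq (seq gz).
Definition ent (A : lmx) (i j : nat) := nth g0 (nth [::] A i) j.
Definition mkm m n (f : nat -> nat -> gz) : lmx := mkseq (fun i => mkseq (fun j => f i j) n) m.
Definition gsum (s : seq gz) := foldr gadd g0 s.
Definition lmul m n p (A B : lmx) :=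
  mkm m p (fun i j => gsum (mkseq (fun k => gmul (ent A i k) (ent B k j)) n)).
Definition ladd m n (A B : lmx) := mkm m n (fun i j => gadd (ent A i j) (ent B i j)).
Definition lopp m n (A : lmx) := mkm m n (fun i j => gopp (ent A i j)).
Definition lscale m n (z : gz) (A : lmx) := mkm m n (fun i j => gmul z (ent A i j)).
Definition ladj m n (A : lmx) := mkm n m (fun i j => gconj (ent A j i)).
Definition ltens m1 n1 m2 n2 (A B : lmx) :=
  mkm (m1 * m2) (n1 * n2)
    (fun i j => gmul (ent A (i %/ m2) (j %/ n2)) (ent B (i %% m2) (j %% n2))).
Definition lbr n (A B : lmx) := ladd n n (lmul n n n A B) (lopp n n (lmul n n n B A)).

Lemma ent_mkm m n f i j : (i < m)%N -> (j < n)%N -> ent (mkm m n f) i j = f i j.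
Proof. by move=> hi hj; rewrite /ent /mkm nth_mkseq //= nth_mkseq. Qed.

Section Emb.
Variable R : realType.
Local Notation C := (R[i]).

Definition zR (z : Z) : R := (int_of_Z z)%:~R.
Definition gC (x : gz) : C := Complex (zR x.1) (zR x.2).

Lemma zR_add a b : zR (Z.add a b) = zR a + zR b.
Proof. by rewrite /zR -intrD; congr intmul; exact: (raddfD int_of_Z a b). Qed.
Lemma zR_opp a : zR (Z.opp a) = - zR a.
Proof. by rewrite /zR -mulrNz; congr intmul; exact: (raddfN int_of_Z a). Qed.
Lemma zR_sub a b : zR (Z.sub a b) = zR a - zR b.
Proof. by rewrite -Z.add_opp_r zR_add zR_opp. Qed.
Lemma zR_mul a b : zR (Z.mul a b) = zR a * zR b.
Proof. by rewrite /zR -intrM; congr intmul; exact: (rmorphM int_of_Z a b). Qed.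
Lemma zR0 : zR Z0 = 0. Proof. by []. Qed.

Lemma gC_add x y : gC (gadd x y) = gC x + gC y.
Proof. by rewrite /gC /= !zR_add. Qed.
Lemma gC_mul x y : gC (gmul x y) = gC x * gC y.
Proof. by rewrite /gC /= zR_sub zR_add !zR_mul. Qed.
Lemma gC_opp x : gC (gopp x) = - gC x.
Proof. by rewrite /gC /= !zR_opp. Qed.
Lemma gC_conj x : gC (gconj x) = Num.conj (gC x).
Proof. by rewrite /gC /= !zR_opp. Qed.
Lemma gC0 : gC g0 = 0. Proof. by []. Qed.

Lemma gC_gsum n f : gC (gsum (mkseq f n)) = \sum_(k < n) gC (f k).
Proof.
rewrite -(big_mkord xpredT (fun k => gC (f k))) /index_iota subn0 /mkseq.
elim: (iota 0 n) => [|a s IH]; first by rewrite big_nil.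
by rewrite big_cons /= gC_add IH.
Qed.

Definition embM m n (A : lmx) : 'M[C]_(m, n) := \matrix_(i, j) gC (ent A i j).

Lemma embM_mul m n p A B : embM m p (lmul m n p A B) = embM m n A *m embM n p B.
Proof.
apply/matrixP => i j; rewrite !mxE ent_mkm // gC_gsum.
by apply: eq_bigr => k _; rewrite gC_mul !mxE.
Qed.
Lemma embM_add m n A B : embM m n (ladd m n A B) = embM m n A + embM m n B.
Proof. by apply/matrixP => i j; rewrite !mxE ent_mkm // gC_add. Qed.
Lemma embM_opp m n A : embM m n (lopp m n A) = - embM m n A.
Proof. by apply/matrixP => i j; rewrite !mxE ent_mkm // gC_opp. Qed.
Lemma embM_scale m n z A : embM m n (lscale m n z A) = gC z *: embM m n A.
Proof. by apply/matrixP => i j; rewrite !mxE ent_mkm // gC_mul. Qed.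
Lemma embM_adj m n A : embM n m (ladj m n A) = adjmx (embM m n A).
Proof. by apply/matrixP => i j; rewrite !mxE ent_mkm // gC_conj. Qed.
Lemma embM_tens m1 n1 m2 n2 A B :
  embM (m1 * m2) (n1 * n2) (ltens m1 n1 m2 n2 A B) = embM m1 n1 A *t embM m2 n2 B.
Proof. by apply/matrixP => i j; rewrite !mxE ent_mkm // gC_mul. Qed.
Lemma embM_nil m n : embM m n [::] = 0.
Proof. by apply/matrixP => i j; rewrite !mxE /ent /= !nth_nil. Qed.
Lemma embME m n A (i : 'I_m) (j : 'I_n) : embM m n A i j = gC (ent A i j).
Proof. by rewrite mxE. Qed.
End Emb.

Section Conc.
Local Open Scope Z_scope.
Definition I3c : lmx := mkm 3 3 (fun i j => if (i == j)%N then (1,0) else (0,0)).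
Definition E3c : lmx := mkm 3 3 (fun i j => if (i == j)%N then (nth 0 [:: 1; -1; 0] i, 0) else (0,0)).
Definition ec (a : nat) : lmx := mkm 3 1 (fun i _ => if (i == a)%N then (1,0) else (0,0)).
Definition dlist : seq Z := [:: 2; 2; 2; 1; 2; 3; 2; 2].
Definition dZ (a : nat) : Z := nth 0 dlist a.
Definition Dc : lmx := mkm 8 8 (fun i j => if (i == j)%N then (dZ i, 0) else (0,0)).
Definition lzero : lmx := mkm 8 8 (fun _ _ => (0,0)).
Definition TAc (a b : nat) : lmx := mkm 8 8 (fun r c =>
  gadd (if (r == a) && (c == b) then (dZ a, 0) else (0,0))
       (gopp (if (r == b) && (c == a) then (dZ b, 0) else (0,0)))).
Definition TSc (a b : nat) : lmx := mkm 8 8 (fun r c =>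
  gadd (if (r == a) && (c == b) then (0, dZ a) else (0,0))
       (if (r == b) && (c == a) then (0, dZ b) else (0,0))).
Definition twoC : gz := (2, 0).
Definition i2C : gz := (0, 2).
Definition twelve : gz := (12, 0).
Definition mkL3 (l : seq gz) : lmx := mkm 3 3 (fun i j => nth (0,0) l (3 * i + j)).
Definition Lcs : seq lmx := [::
  mkL3 [:: (1,0); (0,0); (0,0); (0,0); (-1,0); (0,0); (0,0); (0,0); (0,0)];
  mkL3 [:: (0,0); (0,0); (0,0); (0,0); (1,0); (0,0); (0,0); (0,0); (-1,0)];
  mkL3 [:: (0,0); (1,0); (0,0); (1,0); (0,0); (0,0); (0,0); (0,0); (0,0)];
  mkL3 [:: (0,0); (0,-1); (0,0); (0,1); (0,0); (0,0); (0,0); (0,0); (0,0)];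
  mkL3 [:: (0,0); (0,0); (1,0); (0,0); (0,0); (0,0); (1,0); (0,0); (0,0)];
  mkL3 [:: (0,0); (0,0); (0,-1); (0,0); (0,0); (0,0); (0,1); (0,0); (0,0)];
  mkL3 [:: (0,0); (0,0); (0,0); (0,0); (0,0); (1,0); (0,0); (1,0); (0,0)];
  mkL3 [:: (0,0); (0,0); (0,0); (0,0); (0,0); (0,-1); (0,0); (0,1); (0,0)]].
Definition gen8 : seq lmx := [:: [:: [:: (0,2); (0,0); (0,0); (0,0); (0,0); (0,0); (0,0); (0,0)];
  [:: (0,0); (0,(-2)); (0,0); (0,0); (0,0); (0,0); (0,0); (0,0)];
  [:: (0,0); (0,0); (0,4); (0,0); (0,0); (0,0); (0,0); (0,0)];
  [:: (0,0); (0,0); (0,0); (0,0); (0,0); (0,0); (0,0); (0,0)];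
  [:: (0,0); (0,0); (0,0); (0,0); (0,(-4)); (0,0); (0,0); (0,0)];
  [:: (0,0); (0,0); (0,0); (0,0); (0,0); (0,0); (0,0); (0,0)];
  [:: (0,0); (0,0); (0,0); (0,0); (0,0); (0,0); (0,2); (0,0)];
  [:: (0,0); (0,0); (0,0); (0,0); (0,0); (0,0); (0,0); (0,(-2))]];
 [:: [:: (0,2); (0,0); (0,0); (0,0); (0,0); (0,0); (0,0); (0,0)];
  [:: (0,0); (0,4); (0,0); (0,0); (0,0); (0,0); (0,0); (0,0)];
  [:: (0,0); (0,0); (0,(-2)); (0,0); (0,0); (0,0); (0,0); (0,0)];
  [:: (0,0); (0,0); (0,0); (0,0); (0,0); (0,0); (0,0); (0,0)];
  [:: (0,0); (0,0); (0,0); (0,0); (0,2); (0,0); (0,0); (0,0)];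
  [:: (0,0); (0,0); (0,0); (0,0); (0,0); (0,0); (0,0); (0,0)];
  [:: (0,0); (0,0); (0,0); (0,0); (0,0); (0,0); (0,(-4)); (0,0)];
  [:: (0,0); (0,0); (0,0); (0,0); (0,0); (0,0); (0,0); (0,(-2))]];
 [:: [:: (0,0); (0,2); (0,0); (0,0); (0,0); (0,0); (0,0); (0,0)];
  [:: (0,2); (0,0); (0,0); (0,0); (0,0); (0,0); (0,0); (0,0)];
  [:: (0,0); (0,0); (0,0); (0,4); (0,0); (0,0); (0,0); (0,0)];
  [:: (0,0); (0,0); (0,2); (0,0); (0,2); (0,0); (0,0); (0,0)];
  [:: (0,0); (0,0); (0,0); (0,4); (0,0); (0,0); (0,0); (0,0)];
  [:: (0,0); (0,0); (0,0); (0,0); (0,0); (0,0); (0,0); (0,0)];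
  [:: (0,0); (0,0); (0,0); (0,0); (0,0); (0,0); (0,0); (0,2)];
  [:: (0,0); (0,0); (0,0); (0,0); (0,0); (0,0); (0,2); (0,0)]];
 [:: [:: (0,0); (2,0); (0,0); (0,0); (0,0); (0,0); (0,0); (0,0)];
  [:: ((-2),0); (0,0); (0,0); (0,0); (0,0); (0,0); (0,0); (0,0)];
  [:: (0,0); (0,0); (0,0); (4,0); (0,0); (0,0); (0,0); (0,0)];
  [:: (0,0); (0,0); ((-2),0); (0,0); (2,0); (0,0); (0,0); (0,0)];
  [:: (0,0); (0,0); (0,0); ((-4),0); (0,0); (0,0); (0,0); (0,0)];
  [:: (0,0); (0,0); (0,0); (0,0); (0,0); (0,0); (0,0); (0,0)];
  [:: (0,0); (0,0); (0,0); (0,0); (0,0); (0,0); (0,0); (2,0)];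
  [:: (0,0); (0,0); (0,0); (0,0); (0,0); (0,0); ((-2),0); (0,0)]];
 [:: [:: (0,0); (0,0); (0,0); (0,(-2)); (0,0); (0,2); (0,0); (0,0)];
  [:: (0,0); (0,0); (0,0); (0,0); (0,(-2)); (0,0); (0,0); (0,0)];
  [:: (0,0); (0,0); (0,0); (0,0); (0,0); (0,0); (0,2); (0,0)];
  [:: (0,(-1)); (0,0); (0,0); (0,0); (0,0); (0,0); (0,0); (0,1)];
  [:: (0,0); (0,(-2)); (0,0); (0,0); (0,0); (0,0); (0,0); (0,0)];
  [:: (0,3); (0,0); (0,0); (0,0); (0,0); (0,0); (0,0); (0,(-3))];
  [:: (0,0); (0,0); (0,2); (0,0); (0,0); (0,0); (0,0); (0,0)];
  [:: (0,0); (0,0); (0,0); (0,2); (0,0); (0,(-2)); (0,0); (0,0)]];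
 [:: [:: (0,0); (0,0); (0,0); ((-2),0); (0,0); (2,0); (0,0); (0,0)];
  [:: (0,0); (0,0); (0,0); (0,0); ((-2),0); (0,0); (0,0); (0,0)];
  [:: (0,0); (0,0); (0,0); (0,0); (0,0); (0,0); (2,0); (0,0)];
  [:: (1,0); (0,0); (0,0); (0,0); (0,0); (0,0); (0,0); (1,0)];
  [:: (0,0); (2,0); (0,0); (0,0); (0,0); (0,0); (0,0); (0,0)];
  [:: ((-3),0); (0,0); (0,0); (0,0); (0,0); (0,0); (0,0); ((-3),0)];
  [:: (0,0); (0,0); ((-2),0); (0,0); (0,0); (0,0); (0,0); (0,0)];
  [:: (0,0); (0,0); (0,0); ((-2),0); (0,0); (2,0); (0,0); (0,0)]];
 [:: [:: (0,0); (0,0); (0,2); (0,0); (0,0); (0,0); (0,0); (0,0)];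
  [:: (0,0); (0,0); (0,0); (0,2); (0,0); (0,2); (0,0); (0,0)];
  [:: (0,2); (0,0); (0,0); (0,0); (0,0); (0,0); (0,0); (0,0)];
  [:: (0,0); (0,1); (0,0); (0,0); (0,0); (0,0); (0,1); (0,0)];
  [:: (0,0); (0,0); (0,0); (0,0); (0,0); (0,0); (0,0); (0,2)];
  [:: (0,0); (0,3); (0,0); (0,0); (0,0); (0,0); (0,3); (0,0)];
  [:: (0,0); (0,0); (0,0); (0,2); (0,0); (0,2); (0,0); (0,0)];
  [:: (0,0); (0,0); (0,0); (0,0); (0,2); (0,0); (0,0); (0,0)]];
 [:: [:: (0,0); (0,0); (2,0); (0,0); (0,0); (0,0); (0,0); (0,0)];
  [:: (0,0); (0,0); (0,0); (2,0); (0,0); (2,0); (0,0); (0,0)];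
  [:: ((-2),0); (0,0); (0,0); (0,0); (0,0); (0,0); (0,0); (0,0)];
  [:: (0,0); ((-1),0); (0,0); (0,0); (0,0); (0,0); (1,0); (0,0)];
  [:: (0,0); (0,0); (0,0); (0,0); (0,0); (0,0); (0,0); (2,0)];
  [:: (0,0); ((-3),0); (0,0); (0,0); (0,0); (0,0); (3,0); (0,0)];
  [:: (0,0); (0,0); (0,0); ((-2),0); (0,0); ((-2),0); (0,0); (0,0)];
  [:: (0,0); (0,0); (0,0); (0,0); ((-2),0); (0,0); (0,0); (0,0)]];
 [:: [:: (0,(-2)); (0,0); (0,0); (0,0); (0,0); (0,0); (0,0); (0,0)];
  [:: (0,0); (0,(-2)); (0,0); (0,0); (0,0); (0,0); (0,0); (0,0)];
  [:: (0,0); (0,0); (0,2); (0,0); (0,0); (0,0); (0,0); (0,0)];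
  [:: (0,0); (0,0); (0,0); (0,(-2)); (0,0); (0,0); (0,0); (0,0)];
  [:: (0,0); (0,0); (0,0); (0,0); (0,2); (0,0); (0,0); (0,0)];
  [:: (0,0); (0,0); (0,0); (0,0); (0,0); (0,(-2)); (0,0); (0,0)];
  [:: (0,0); (0,0); (0,0); (0,0); (0,0); (0,0); (0,0); (0,0)];
  [:: (0,0); (0,0); (0,0); (0,0); (0,0); (0,0); (0,0); (0,0)]]].

Definition words : seq (nat * seq nat) := [:: (0%N, [:: ]); (1%N, [:: ]); (2%N, [:: ]); (3%N, [:: ]); (4%N, [:: ]); (5%N, [:: ]); (6%N, [:: ]); (7%N, [:: ]); (8%N, [:: ]); (2%N, [:: 8%N]); (3%N, [:: 8%N]); (4%N, [:: 8%N]); (5%N, [:: 8%N]); (6%N, [:: 8%N]); (7%N, [:: 8%N]); (2%N, [:: 2%N; 8%N]); (2%N, [:: 3%N; 8%N]); (2%N, [:: 4%N; 8%N]); (2%N, [:: 5%N; 8%N]); (2%N, [:: 6%N; 8%N]); (2%N, [:: 7%N; 8%N]); (2%N, [:: 8%N; 8%N]); (3%N, [:: 3%N; 8%N]); (3%N, [:: 4%N; 8%N]); (3%N, [:: 5%N; 8%N]); (3%N, [:: 6%N; 8%N]); (3%N, [:: 7%N; 8%N]); (3%N, [:: 8%N; 8%N]); (4%N, [:: 4%N; 8%N]); (4%N, [:: 5%N; 8%N]); (4%N, [:: 6%N; 8%N]); (4%N, [:: 7%N; 8%N]); (4%N, [:: 8%N; 8%N]); (5%N, [:: 5%N; 8%N]);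 (5%N, [:: 6%N; 8%N]); (5%N, [:: 7%N; 8%N]); (5%N, [:: 8%N; 8%N]); (6%N, [:: 6%N; 8%N]); (6%N, [:: 7%N; 8%N]); (6%N, [:: 8%N; 8%N]); (7%N, [:: 7%N; 8%N]); (7%N, [:: 8%N; 8%N]); (2%N, [:: 4%N; 4%N; 8%N]); (2%N, [:: 7%N; 4%N; 8%N]); (2%N, [:: 8%N; 4%N; 8%N]); (2%N, [:: 8%N; 5%N; 8%N]); (2%N, [:: 8%N; 6%N; 8%N]); (2%N, [:: 8%N; 7%N; 8%N]); (2%N, [:: 3%N; 8%N; 8%N]); (2%N, [:: 4%N; 8%N; 8%N]); (2%N, [:: 5%N; 8%N; 8%N]); (2%N, [:: 6%N; 8%N; 8%N]); (2%N, [:: 7%N; 8%N; 8%N]); (3%N, [:: 4%N; 4%N; 8%N]); (4%N, [:: 4%N; 4%N; 8%N]); (4%N, [:: 5%N; 4%N; 8%N]); (4%N, [:: 6%N; 4%N; 8%N]); (4%N, [:: 7%N; 4%N; 8%N]); (4%N, [:: 8%N; 6%N; 8%N]); (4%N, [:: 8%N; 7%N; 8%N]); (4%N, [:: 6%N; 8%N; 8%N]); (4%N, [:: 7%N; 8%N; 8%N]); (2%N, [:: 7%N; 8%N; 4%N; 8%N]); (4%N, [:: 4%N; 4%N; 4%N; 8%N])].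

Definition DZ : Z := 6912.

Definition tblA : seq (seq (Z * nat)) := [:: [:: ];
 [:: (4608, 3%N); (1152, 9%N); (216, 27%N); ((-576), 31%N); (72, 42%N)];
 [:: ((-1152), 7%N); ((-288), 13%N); (144, 23%N); ((-432), 41%N); ((-72), 56%N)];
 [:: (576, 5%N); ((-768), 11%N); ((-108), 25%N); ((-108), 46%N); (81, 51%N); ((-12), 54%N)];
 [:: (864, 13%N); ((-216), 23%N); (432, 41%N); ((-216), 44%N); (54, 49%N)];
 [:: (4032, 5%N); (1248, 11%N); ((-108), 25%N); (432, 36%N); ((-108), 46%N); (81, 51%N); (60, 54%N)];
 [:: ((-432), 9%N); (108, 27%N); ((-216), 31%N); ((-648), 34%N); ((-216), 58%N); (216, 60%N)];
 [:: ((-864), 29%N)];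
 [:: ((-4608), 3%N); ((-1152), 9%N); ((-216), 27%N); (576, 31%N); ((-72), 42%N)];
 [:: ];
 [:: ((-864), 11%N); ((-216), 25%N); ((-432), 36%N); (216, 46%N); ((-54), 51%N)];
 [:: ((-576), 7%N); (288, 13%N); ((-36), 23%N); (108, 44%N); ((-81), 49%N); ((-36), 56%N)];
 [:: (1152, 5%N); ((-672), 11%N); (432, 36%N); ((-24), 54%N)];
 [:: (4032, 7%N); ((-1152), 13%N); (468, 23%N); (432, 41%N); ((-108), 44%N); (81, 49%N); ((-180), 56%N)];
 [:: (864, 38%N)];
 [:: ((-432), 9%N); (108, 27%N); (648, 31%N); (216, 34%N); ((-216), 58%N); (216, 60%N)];
 [:: (1152, 7%N); (288, 13%N); ((-144), 23%N); (432, 41%N); (72, 56%N)];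
 [:: (864, 11%N); (216, 25%N); (432, 36%N); ((-216), 46%N); (54, 51%N)];
 [:: ];
 [:: ((-432), 9%N); ((-108), 27%N)];
 [:: (216, 16%N)];
 [:: (1152, 3%N); ((-144), 9%N); (216, 27%N); (72, 31%N); (648, 34%N); ((-36), 42%N); ((-216), 58%N)];
 [:: (1152, 5%N); ((-2400), 11%N); ((-432), 36%N); ((-24), 54%N)];
 [:: (864, 13%N); (432, 18%N); (216, 23%N); (432, 41%N); ((-216), 44%N); (54, 49%N)];
 [:: ((-576), 5%N); (768, 11%N); (108, 25%N); (108, 46%N); ((-81), 51%N); (12, 54%N)];
 [:: (576, 7%N); ((-288), 13%N); (36, 23%N); ((-108), 44%N); (81, 49%N); (36, 56%N)];
 [:: (432, 9%N); (108, 27%N)];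
 [:: ];
 [:: (432, 9%N); ((-108), 27%N)];
 [:: (108, 16%N); ((-432), 29%N); ((-432), 38%N); ((-108), 62%N)];
 [:: (576, 7%N); ((-288), 13%N); ((-216), 18%N); (36, 23%N); (108, 44%N); ((-81), 49%N); (36, 56%N)];
 [:: (576, 5%N); ((-768), 11%N); ((-216), 20%N); ((-108), 25%N); (108, 46%N); ((-81), 51%N); ((-12), 54%N)];
 [:: ((-864), 13%N); (216, 23%N); ((-432), 41%N); (216, 44%N); ((-54), 49%N)];
 [:: ((-1152), 5%N); (672, 11%N); ((-432), 36%N); (24, 54%N)];
 [:: ((-216), 16%N)];
 [:: ((-432), 9%N); (108, 27%N)];
 [:: ];
 [:: (1152, 3%N); (720, 9%N); ((-216), 27%N); ((-360), 31%N); (216, 34%N); ((-36), 42%N); (216, 58%N)];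
 [:: (864, 11%N); (432, 20%N); ((-216), 25%N); (432, 36%N); ((-216), 46%N); (54, 51%N)];
 [:: (1152, 7%N); ((-1440), 13%N); ((-144), 23%N); ((-432), 41%N); (72, 56%N)];
 [:: ((-4032), 5%N); ((-1248), 11%N); (108, 25%N); ((-432), 36%N); (108, 46%N); ((-81), 51%N); ((-60), 54%N)];
 [:: ((-4032), 7%N); (1152, 13%N); ((-468), 23%N); ((-432), 41%N); (108, 44%N); ((-81), 49%N); (180, 56%N)];
 [:: ((-1152), 3%N); (144, 9%N); ((-216), 27%N); ((-72), 31%N); ((-648), 34%N); (36, 42%N); (216, 58%N)];
 [:: ((-108), 16%N); (432, 29%N); (432, 38%N); (108, 62%N)];
 [:: ((-1152), 3%N); ((-720), 9%N); (216, 27%N); (360, 31%N); ((-216), 34%N); (36, 42%N); ((-216), 58%N)];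
 [:: ];
 [:: (2880, 7%N); (2880, 13%N); (216, 18%N); ((-468), 23%N); (432, 41%N); ((-108), 44%N); (81, 49%N); (180, 56%N)];
 [:: ((-2880), 5%N); ((-480), 11%N); ((-216), 20%N); ((-108), 25%N); ((-432), 36%N); (108, 46%N); ((-81), 51%N); (60, 54%N)];
 [:: (432, 9%N); ((-108), 27%N); (216, 31%N); (648, 34%N); (216, 58%N); ((-216), 60%N)];
 [:: ((-864), 38%N)];
 [:: ((-1152), 5%N); (2400, 11%N); (432, 36%N); (24, 54%N)];
 [:: ((-576), 7%N); (288, 13%N); (216, 18%N); ((-36), 23%N); ((-108), 44%N); (81, 49%N); ((-36), 56%N)];
 [:: ((-864), 11%N); ((-432), 20%N); (216, 25%N); ((-432), 36%N); (216, 46%N); ((-54), 51%N)];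
 [:: ((-2880), 7%N); ((-2880), 13%N); ((-216), 18%N); (468, 23%N); ((-432), 41%N); (108, 44%N); ((-81), 49%N); ((-180), 56%N)];
 [:: ];
 [:: (2304, 3%N); ((-1152), 9%N); (216, 27%N); (576, 31%N); ((-72), 42%N)];
 [:: (864, 29%N)];
 [:: (432, 9%N); ((-108), 27%N); ((-648), 31%N); ((-216), 34%N); (216, 58%N); ((-216), 60%N)];
 [:: ((-864), 13%N); ((-432), 18%N); ((-216), 23%N); ((-432), 41%N); (216, 44%N); ((-54), 49%N)];
 [:: ((-576), 5%N); (768, 11%N); (216, 20%N); (108, 25%N); ((-108), 46%N); (81, 51%N); (12, 54%N)];
 [:: ((-1152), 7%N); (1440, 13%N); (144, 23%N); (432, 41%N); ((-72), 56%N)];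
 [:: (2880, 5%N); (480, 11%N); (216, 20%N); (108, 25%N); (432, 36%N); ((-108), 46%N); (81, 51%N); ((-60), 54%N)];
 [:: ((-2304), 3%N); (1152, 9%N); ((-216), 27%N); ((-576), 31%N); (72, 42%N)];
 [:: ]].

Definition tblS : seq (seq (Z * nat)) := [:: [:: (5376, 0%N); (1536, 1%N); ((-6912), 8%N); ((-60), 15%N); (36, 22%N); (272, 28%N); (144, 33%N); (144, 37%N); ((-240), 40%N); (96, 43%N); (54, 48%N); ((-4), 63%N)];
 [:: (4608, 2%N); ((-1152), 10%N); (216, 21%N); (576, 30%N); ((-72), 53%N)];
 [:: ((-1152), 6%N); (288, 14%N); ((-144), 17%N); ((-432), 39%N); (72, 57%N)];
 [:: (576, 4%N); (1152, 12%N); (108, 26%N); (108, 47%N); ((-81), 52%N); (36, 55%N)];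
 [:: ((-864), 14%N); (216, 24%N); (432, 39%N); (216, 45%N); ((-54), 50%N)];
 [:: (4032, 4%N); ((-3168), 12%N); (108, 26%N); (432, 32%N); (108, 47%N); ((-81), 52%N); ((-180), 55%N)];
 [:: ((-432), 10%N); ((-108), 21%N); ((-216), 30%N); (648, 35%N); (216, 59%N); ((-216), 61%N)];
 [:: ((-432), 28%N); (432, 33%N)];
 [:: (4608, 2%N); ((-1152), 10%N); (216, 21%N); (576, 30%N); ((-72), 53%N)];
 [:: ((-3840), 0%N); (1536, 1%N); ((-6912), 8%N); (84, 15%N); (36, 22%N); ((-304), 28%N); (144, 33%N); (144, 37%N); (336, 40%N); ((-48), 43%N); ((-54), 48%N); ((-4), 63%N)];
 [:: (864, 12%N); (216, 26%N); ((-432), 32%N); ((-216), 47%N); (54, 52%N)];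
 [:: ((-576), 6%N); ((-288), 14%N); ((-72), 17%N); (108, 24%N); ((-108), 45%N); (81, 50%N); (36, 57%N)];
 [:: (1152, 4%N); (1440, 12%N); (432, 32%N); (72, 55%N)];
 [:: (4032, 6%N); (1152, 14%N); ((-360), 17%N); ((-108), 24%N); (432, 39%N); (108, 45%N); ((-81), 50%N); (180, 57%N)];
 [:: (432, 37%N); ((-432), 40%N)];
 [:: ((-432), 10%N); ((-108), 21%N); (648, 30%N); ((-216), 35%N); (216, 59%N); ((-216), 61%N)];
 [:: ((-1152), 6%N); (288, 14%N); ((-144), 17%N); ((-432), 39%N); (72, 57%N)];
 [:: (864, 12%N); (216, 26%N); ((-432), 32%N); ((-216), 47%N); (54, 52%N)];
 [:: (768, 0%N); (1536, 1%N); ((-6912), 8%N); (84, 15%N); (36, 22%N); (464, 28%N); (144, 33%N); (144, 37%N); (336, 40%N); ((-48), 43%N); ((-54), 48%N); (8, 63%N)];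
 [:: (432, 10%N); ((-108), 21%N)];
 [:: (108, 15%N); ((-108), 22%N)];
 [:: (1152, 2%N); (144, 10%N); (216, 21%N); ((-72), 30%N); (648, 35%N); (36, 53%N); ((-216), 59%N)];
 [:: (1152, 4%N); (3168, 12%N); ((-432), 32%N); (72, 55%N)];
 [:: ((-864), 14%N); (432, 17%N); ((-216), 24%N); (432, 39%N); (216, 45%N); ((-54), 50%N)];
 [:: (576, 4%N); (1152, 12%N); (108, 26%N); (108, 47%N); ((-81), 52%N); (36, 55%N)];
 [:: ((-576), 6%N); ((-288), 14%N); ((-72), 17%N); (108, 24%N); ((-108), 45%N); (81, 50%N); (36, 57%N)];
 [:: (432, 10%N); ((-108), 21%N)];
 [:: (384, 0%N); (768, 1%N); ((-3456), 8%N); ((-12), 15%N); ((-36), 22%N); (232, 28%N); (72, 33%N); (72, 37%N); (168, 40%N); ((-24), 43%N); (4, 63%N)];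
 [:: ((-432), 10%N); ((-108), 21%N)];
 [:: ((-1152), 0%N); (180, 15%N); ((-504), 28%N); (216, 33%N); ((-216), 37%N); (504, 40%N); ((-180), 43%N)];
 [:: (576, 6%N); (288, 14%N); ((-144), 17%N); ((-108), 24%N); ((-108), 45%N); (81, 50%N); ((-36), 57%N)];
 [:: (576, 4%N); (1152, 12%N); ((-216), 19%N); (108, 26%N); ((-108), 47%N); (81, 52%N); (36, 55%N)];
 [:: ((-864), 14%N); (216, 24%N); (432, 39%N); (216, 45%N); ((-54), 50%N)];
 [:: (1152, 4%N); (1440, 12%N); (432, 32%N); (72, 55%N)];
 [:: (108, 15%N); ((-108), 22%N)];
 [:: ((-432), 10%N); ((-108), 21%N)];
 [:: (768, 0%N); (1536, 1%N); ((-6912), 8%N); (84, 15%N); (36, 22%N); (464, 28%N); (144, 33%N); (144, 37%N); (336, 40%N); ((-48), 43%N); (54, 48%N); (8, 63%N)];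
 [:: ((-1152), 2%N); (720, 10%N); (216, 21%N); ((-360), 30%N); ((-216), 35%N); ((-36), 53%N); ((-216), 59%N)];
 [:: ((-864), 12%N); (432, 19%N); (216, 26%N); (432, 32%N); (216, 47%N); ((-54), 52%N)];
 [:: (1152, 6%N); (1440, 14%N); (144, 17%N); ((-432), 39%N); ((-72), 57%N)];
 [:: (4032, 4%N); ((-3168), 12%N); (108, 26%N); (432, 32%N); (108, 47%N); ((-81), 52%N); ((-180), 55%N)];
 [:: (4032, 6%N); (1152, 14%N); ((-360), 17%N); ((-108), 24%N); (432, 39%N); (108, 45%N); ((-81), 50%N); (180, 57%N)];
 [:: (1152, 2%N); (144, 10%N); (216, 21%N); ((-72), 30%N); (648, 35%N); (36, 53%N); ((-216), 59%N)];
 [:: ((-1152), 0%N); (180, 15%N); ((-504), 28%N); (216, 33%N); ((-216), 37%N); (504, 40%N); ((-180), 43%N)];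
 [:: ((-1152), 2%N); (720, 10%N); (216, 21%N); ((-360), 30%N); ((-216), 35%N); ((-36), 53%N); ((-216), 59%N)];
 [:: ((-1152), 0%N); ((-2304), 1%N); ((-10368), 8%N); (252, 15%N); (108, 22%N); (744, 28%N); ((-216), 33%N); ((-216), 37%N); (360, 40%N); ((-144), 43%N); (24, 63%N)];
 [:: (2880, 6%N); ((-2880), 14%N); (576, 17%N); (108, 24%N); (432, 39%N); (108, 45%N); ((-81), 50%N); ((-180), 57%N)];
 [:: ((-2880), 4%N); ((-1440), 12%N); ((-216), 19%N); (108, 26%N); ((-432), 32%N); ((-108), 47%N); (81, 52%N); ((-180), 55%N)];
 [:: ((-432), 10%N); ((-108), 21%N); ((-216), 30%N); (648, 35%N); (216, 59%N); ((-216), 61%N)];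
 [:: (432, 37%N); ((-432), 40%N)];
 [:: (1152, 4%N); (3168, 12%N); ((-432), 32%N); (72, 55%N)];
 [:: (576, 6%N); (288, 14%N); ((-144), 17%N); ((-108), 24%N); ((-108), 45%N); (81, 50%N); ((-36), 57%N)];
 [:: ((-864), 12%N); (432, 19%N); (216, 26%N); (432, 32%N); (216, 47%N); ((-54), 52%N)];
 [:: (2880, 6%N); ((-2880), 14%N); (576, 17%N); (108, 24%N); (432, 39%N); (108, 45%N); ((-81), 50%N); ((-180), 57%N)];
 [:: (768, 0%N); ((-3072), 1%N); ((-6912), 8%N); (84, 15%N); (36, 22%N); ((-304), 28%N); (144, 33%N); (144, 37%N); (336, 40%N); ((-48), 43%N); (54, 48%N); ((-4), 63%N)];
 [:: (2304, 2%N); (1152, 10%N); (216, 21%N); ((-576), 30%N); (72, 53%N)];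
 [:: ((-432), 28%N); (432, 33%N)];
 [:: ((-432), 10%N); ((-108), 21%N); (648, 30%N); ((-216), 35%N); (216, 59%N); ((-216), 61%N)];
 [:: ((-864), 14%N); (432, 17%N); ((-216), 24%N); (432, 39%N); (216, 45%N); ((-54), 50%N)];
 [:: (576, 4%N); (1152, 12%N); ((-216), 19%N); (108, 26%N); ((-108), 47%N); (81, 52%N); (36, 55%N)];
 [:: (1152, 6%N); (1440, 14%N); (144, 17%N); ((-432), 39%N); ((-72), 57%N)];
 [:: ((-2880), 4%N); ((-1440), 12%N); ((-216), 19%N); (108, 26%N); ((-432), 32%N); ((-108), 47%N); (81, 52%N); ((-180), 55%N)];
 [:: (2304, 2%N); (1152, 10%N); (216, 21%N); ((-576), 30%N); (72, 53%N)];
 [:: ((-3840), 0%N); ((-3072), 1%N); ((-6912), 8%N); ((-60), 15%N); (36, 22%N); (272, 28%N); (144, 33%N); (144, 37%N); ((-240), 40%N); (96, 43%N); ((-54), 48%N); ((-4), 63%N)]].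

End Conc.

Definition tens3 (A B D : lmx) : lmx := ltens 9 9 3 3 (ltens 3 3 3 3 A B) D.
Definition locC (L : lmx) : lmx :=
  ladd 27 27 (ladd 27 27 (tens3 L I3c I3c) (tens3 I3c L I3c)) (tens3 I3c I3c L).
Definition HC : lmx :=
  ladd 27 27 (ladd 27 27 (tens3 E3c E3c I3c) (tens3 E3c I3c E3c)) (tens3 I3c E3c E3c).
Definition gen27 : seq lmx :=
  rcons (map (fun L => lscale 27 27 i2C (locC L)) Lcs) (lscale 27 27 i2C HC).
Definition kc (a b c : nat) : lmx := ltens 9 1 3 1 (ltens 3 1 3 1 (ec a) (ec b)) (ec c).
Notation vadd := (ladd 27 1).
Notation vopp := (lopp 27 1).
Notation vsc := (lscale 27 1).
Definition VcList : seq lmx := [::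
  vadd (vadd (vsc twoC (kc 0 0 1)) (vopp (kc 1 0 0))) (vopp (kc 0 1 0));
  vadd (vadd (vopp (vsc twoC (kc 1 1 0))) (kc 1 0 1)) (kc 0 1 1);
  vadd (vadd (vsc twoC (kc 0 0 2)) (vopp (kc 2 0 0))) (vopp (kc 0 2 0));
  vadd (vadd (vadd (vadd (vadd (vsc twoC (kc 1 0 2)) (vsc twoC (kc 0 1 2))) (vopp (kc 1 2 0))) (vopp (kc 2 1 0))) (vopp (kc 2 0 1))) (vopp (kc 0 2 1));
  vadd (vadd (vsc twoC (kc 1 1 2)) (vopp (kc 1 2 1))) (vopp (kc 2 1 1));
  vadd (vadd (vadd (kc 0 2 1) (vopp (kc 1 2 0))) (kc 2 0 1)) (vopp (kc 2 1 0));
  vadd (vadd (vopp (vsc twoC (kc 2 2 0))) (kc 0 2 2)) (kc 2 0 2);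
  vadd (vadd (kc 1 2 2) (kc 2 1 2)) (vopp (vsc twoC (kc 2 2 1)))].
Definition Wc : lmx := mkm 27 8 (fun j i => ent (nth [::] VcList i) j 0).
Definition evalW (w : nat * seq nat) : lmx :=
  foldr (fun i acc => lbr 8 (nth [::] gen8 i) acc) (nth [::] gen8 w.1) w.2.
Definition lcomb (B : seq lmx) (l : seq (Z * nat)) : lmx :=
  foldr (fun zk acc => ladd 8 8 (lscale 8 8 (zk.1, Z0) (nth [::] B zk.2)) acc) lzero l.
Definition chk_gen : bool :=
  all (fun j => lmul 27 27 8 (nth [::] gen27 j) Wc == lmul 27 8 8 Wc (nth [::] gen8 j)) (iota 0 9).
Definition chk_P : bool :=
  lmul 27 8 8 (lmul 27 8 8 Wc Dc) (lmul 8 27 8 (ladj 27 8 Wc) Wc) == lscale 27 8 twelve Wc.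
Definition chk_L : bool :=
  all (fun L => (ladj 3 3 L == L) && (gsum [:: ent L 0 0; ent L 1 1; ent L 2 2] == g0)) Lcs.
Definition Bc : seq lmx := map evalW words.
Definition chk_Lie : bool :=
  all (fun ab => (lcomb Bc (nth [::] tblA ab) == lscale 8 8 (DZ, Z0) (TAc (ab %/ 8) (ab %% 8)))
              && (lcomb Bc (nth [::] tblS ab) == lscale 8 8 (DZ, Z0) (TSc (ab %/ 8) (ab %% 8))))
      (iota 0 64).
Lemma chk_gen_ok : chk_gen = true. Proof. vm_compute. reflexivity. Qed.
Lemma chk_P_ok : chk_P = true. Proof. vm_compute. reflexivity. Qed.
Lemma chk_L_ok : chk_L = true. Proof. vm_compute. reflexivity. Qed.
Lemma chk_Lie_ok : chk_Lie = true. Proof. vm_compute. reflexivity. Qed.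

Section Abs.
Variable R : realType.
Local Notation C := (R[i]).
Local Notation embM := (@embM R).
Local Notation gC := (@gC R).

Lemma gC_nat (n : nat) : gC (Z.of_nat n, Z0) = n%:R.
Proof.
rewrite /gC /= /zR.
have -> : int_of_Z (Z.of_nat n) = n%:Z.
  by case: n => // n; rewrite /= SuccNat2Pos.id_succ.
by rewrite -[RHS](rmorph_nat (real_complex_def (Phant R))) /= pmulrn.
Qed.
Lemma gC_two : gC twoC = 2. Proof. exact: (gC_nat 2). Qed.
Lemma gC_twelve : gC twelve = 12. Proof. exact: (gC_nat 12). Qed.
Lemma gC_i2 : gC i2C = 2 * 'i.
Proof.
have -> : i2C = gmul twoC (Z0, Zpos xH) by [].
by rewrite gC_mul gC_two.
Qed.

Lemma I3E : I3 R = embM 3 3 I3c.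
Proof.
apply/matrixP => i j; rewrite !mxE ent_mkm //.
case: i j => [[|[|[|i]]] Hi] [[|[|[|j]]] Hj] //=.
all: try by rewrite -(gC_nat 1).
all: by rewrite -(gC_nat 0).
Qed.

Lemma E3E : E3 R = embM 3 3 E3c.
Proof.
apply/matrixP => i j; rewrite !mxE ent_mkm //.
case: i j => [[|[|[|i]]] Hi] [[|[|[|j]]] Hj] //=.
all: try by rewrite -(gC_nat 0).
have -> : (Zneg xH, Z0) = gopp (Z.of_nat 1, Z0) by [].
by rewrite gC_opp gC_nat.
Qed.

Lemma e3E (a : nat) : (a < 3)%N -> e3 R (inord a) = embM 3 1 (ec a).
Proof.
move=> ha; apply/matrixP => i j; rewrite !mxE ent_mkm // (ord1 j) eqxx andbT.
have -> : (i == inord a) = (i == a :> nat) by rewrite -val_eqE /= inordK.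
by case: (_ == _); rewrite ?(gC_nat 1) ?(gC_nat 0).
Qed.

Lemma kE a b c : (a < 3)%N -> (b < 3)%N -> (c < 3)%N -> k R a b c = embM 27 1 (kc a b c).
Proof. by move=> ha hb hc; rewrite /k /ket !e3E // -!embM_tens. Qed.

Lemma embM_tens99 A B : embM 27 27 (ltens 9 9 3 3 A B) = embM 9 9 A *t embM 3 3 B.
Proof. exact (@embM_tens R 9 9 3 3 A B). Qed.
Lemma embM_tens33 A B : embM 9 9 (ltens 3 3 3 3 A B) = embM 3 3 A *t embM 3 3 B.
Proof. exact (@embM_tens R 3 3 3 3 A B). Qed.

Lemma locE L : loc_sum (embM 3 3 L) = embM 27 27 (locC L).
Proof.
by rewrite /locC /tens3 !embM_add !embM_tens99 !embM_tens33 -I3E.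
Qed.

Lemma HintE : Hint R = embM 27 27 HC.
Proof.
by rewrite /HC /tens3 !embM_add !embM_tens99 !embM_tens33 -I3E -E3E.
Qed.

Lemma VlistE : Vlist R = map (embM 27 1) VcList.
Proof.
rewrite /Vlist !kE // -gC_two -!embM_scale -!embM_opp -!embM_add.
by rewrite /VcList.
Qed.
End Abs.

Section Abs2.
Variable R : realType.
Local Notation C := (R[i]).
Local Notation embM := (@embM R).
Local Notation gC := (@gC R).
Local Notation Lalg := (@Lalg R).

Lemma Lalg0 : Lalg 0.
Proof.
have -> : (0 : 'M[C]_27) = 0 *: ('i *: Hint R) by rewrite scale0r.
apply: lie_scale; first exact: rpred0.
by apply: lie_base; right.
Qed.

Definition W : 'M[C]_(27, 8) := embM 27 8 Wc.
Definition ok (Y : 'M[C]_27) (M : 'M[C]_8) := Lalg Y /\ Y *m W = W *m M.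

Lemma ok0 : ok 0 0.
Proof. by split; [exact: Lalg0 | rewrite mul0mx mulmx0]. Qed.
Lemma okD Y Z M N : ok Y M -> ok Z N -> ok (Y + Z) (M + N).
Proof.
by case=> h1 e1 [h2 e2]; split; [exact: lie_add | rewrite mulmxDl mulmxDr e1 e2].
Qed.
Lemma okZ c Y M : c \is Num.real -> ok Y M -> ok (c *: Y) (c *: M).
Proof.
by move=> hc [h1 e1]; split; [exact: lie_scale | rewrite -scalemxAl -scalemxAr e1].
Qed.
Lemma okB Y Z M N : ok Y M -> ok Z N -> ok (Y *m Z - Z *m Y) (M *m N - N *m M).
Proof.
case=> h1 e1 [h2 e2]; split; first exact: lie_bracket.
by rewrite mulmxBl mulmxBr -!mulmxA e1 e2 !mulmxA e1 e2.
Qed.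
Lemma ok_sum (I : Type) (r : seq I) (P : pred I) (F : I -> 'M[C]_27) (G : I -> 'M[C]_8) :
  (forall i, P i -> ok (F i) (G i)) ->
  ok (\sum_(i <- r | P i) F i) (\sum_(i <- r | P i) G i).
Proof.
move=> h; apply: (big_rec2 (fun a b => ok a b)); first exact: ok0.
by move=> i a b Pi oab; apply: okD => //; exact: h.
Qed.

Lemma size_gen27 : size gen27 = 9%N.
Proof. by rewrite /gen27 size_rcons size_map. Qed.

Lemma gC_real z : gC (z, Z0) \is Num.real.
Proof. by rewrite /gC complex_real. Qed.

Lemma chk_L_nth j : (j < 8)%N ->
  ladj 3 3 (nth [::] Lcs j) = nth [::] Lcs j /\
  gsum [:: ent (nth [::] Lcs j) 0 0; ent (nth [::] Lcs j) 1 1; ent (nth [::] Lcs j) 2 2] = g0.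
Proof.
move=> hj; have := chk_L_ok; rewrite /chk_L => /allP /(_ (nth [::] Lcs j)).
by case/(_ (mem_nth _ _))/andP => // /eqP -> /eqP ->.
Qed.

Lemma tr_embM3 L : \tr (embM 3 3 L) = gC (gsum [:: ent L 0 0; ent L 1 1; ent L 2 2]).
Proof.
rewrite /mxtrace !big_ord_recr big_ord0 /= !mxE /gsum /= !gC_add gC0.
by rewrite add0r addr0 addrA.
Qed.

Lemma Lalg_gen j : Lalg (embM 27 27 (nth [::] gen27 j)).
Proof.
case: (ltnP j 8) => hj.
  rewrite /gen27 nth_rcons size_map hj (nth_map [::]) //.
  rewrite embM_scale gC_i2 -locE -scalerA.
  apply: lie_scale; first exact: realn.
  apply: lie_base; left; exists (embM 3 3 (nth [::] Lcs j)).
  have [h1 h2] := chk_L_nth j hj.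

  by rewrite -embM_adj h1 tr_embM3 h2 gC0.
case: (ltnP j 9) => hj'.
  have -> : j = 8%N by apply/eqP; rewrite eqn_leq hj -ltnS hj'.
  rewrite /gen27 nth_rcons size_map ltnn eqxx.
  rewrite embM_scale gC_i2 -HintE -scalerA.
  apply: lie_scale; first exact: realn.
  by apply: lie_base; right.
by rewrite nth_default ?size_gen27 // embM_nil; exact: Lalg0.
Qed.

Definition absgen j := embM 27 27 (nth [::] gen27 j).

Lemma ok_gen j : ok (absgen j) (embM 8 8 (nth [::] gen8 j)).
Proof.
split; first exact: Lalg_gen.
case: (ltnP j 9) => hj.
  have := chk_gen_ok; rewrite /chk_gen => /allP /(_ j).
  rewrite mem_iota add0n hj => /(_ isT) /eqP H.
  by rewrite /W /absgen -!embM_mul H.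
rewrite /absgen !nth_default ?size_gen27 // !embM_nil.
by rewrite mul0mx mulmx0.
Qed.

Definition evalA (w : nat * seq nat) : 'M[C]_27 :=
  foldr (fun i acc => absgen i *m acc - acc *m absgen i) (absgen w.1) w.2.

Lemma embM_br A B : embM 8 8 (lbr 8 A B) = embM 8 8 A *m embM 8 8 B - embM 8 8 B *m embM 8 8 A.
Proof. by rewrite /lbr embM_add embM_opp !embM_mul. Qed.

Lemma ok_word w : ok (evalA w) (embM 8 8 (evalW w)).
Proof.
case: w => i s; rewrite /evalA /evalW /=.
elim: s => [|j s IH] /=; first exact: ok_gen.
by rewrite embM_br; apply: okB => //; exact: ok_gen.
Qed.

Definition BA := map evalA words.
Definition lcombA (l : seq (Z * nat)) : 'M[C]_27 :=
  foldr (fun zk acc => gC (zk.1, Z0) *: nth 0 BA zk.2 + acc) 0 l.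

Lemma ok_nthB kk : ok (nth 0 BA kk) (embM 8 8 (nth [::] Bc kk)).
Proof.
case: (ltnP kk (size words)) => hk.
  by rewrite /BA /Bc !(nth_map (0%N, [::])) //; exact: ok_word.
rewrite !nth_default ?size_map // embM_nil; exact: ok0.
Qed.

Lemma embM_lzero : embM 8 8 lzero = 0.
Proof. by apply/matrixP => i j; rewrite !mxE ent_mkm. Qed.

Lemma ok_lcomb l : ok (lcombA l) (embM 8 8 (lcomb Bc l)).
Proof.
elim: l => [|[z kk] l IH].
  by rewrite /lcombA /lcomb /= embM_lzero; exact: ok0.
rewrite [lcomb _ _]/lcomb [foldr _ _ _]/= -/(lcomb Bc l) embM_add embM_scale.
apply: okD => //; apply: okZ; [exact: gC_real | exact: ok_nthB].
Qed.
End Abs2.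

Opaque embM.


Section Abs3.
Variable R : realType.
Local Notation C := (R[i]).
Local Notation embM := (@embM R).
Local Notation gC := (@gC R).
Local Notation Lalg := (@Lalg R).
Local Notation W := (@W R).
Local Notation ok := (@ok R).

Definition DCc : C := gC (DZ, Z0).
Lemma DCc_neq0 : DCc != 0.
Proof.
rewrite /DCc (_ : (DZ, Z0) = (Z.of_nat 6912, Z0)) //.
by rewrite gC_nat pnatr_eq0.
Qed.

Definition YA (a b : nat) := DCc^-1 *: lcombA R (nth [::] tblA (8 * a + b)).
Definition YS (a b : nat) := DCc^-1 *: lcombA R (nth [::] tblS (8 * a + b)).

Lemma chk_Lie_nth {a b : nat} : (a < 8)%N -> (b < 8)%N ->
  lcomb Bc (nth [::] tblA (8 * a + b)) = lscale 8 8 (DZ, Z0) (TAc a b) /\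
  lcomb Bc (nth [::] tblS (8 * a + b)) = lscale 8 8 (DZ, Z0) (TSc a b).
Proof.
move=> ha hb; have := chk_Lie_ok; rewrite /chk_Lie => /allP /(_ (8 * a + b)).
rewrite mem_iota add0n.
have h64 : (8 * a + b < 64)%N by lia.
move=> /(_ h64) /andP [/eqP h1 /eqP h2].
have e1 : ((8 * a + b) %/ 8 = a)%N by lia.
have e2 : ((8 * a + b) %% 8 = b)%N by lia.
by rewrite e1 e2 in h1 h2.
Qed.

Lemma ok_fix l T : lcomb Bc l = lscale 8 8 (DZ, Z0) T ->
  ok (DCc^-1 *: lcombA R l) (embM 8 8 T).
Proof.
move=> h; have := ok_lcomb R l; rewrite h embM_scale -/DCc.
move/(@okZ R DCc^-1 _ _); rewrite realV gC_real => /(_ isT).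
by rewrite scalerA mulVf ?DCc_neq0 // scale1r.
Qed.

Lemma ok_TA a b : (a < 8)%N -> (b < 8)%N -> ok (YA a b) (embM 8 8 (TAc a b)).
Proof. by move=> ha hb; have [h1 _] := chk_Lie_nth (a:=a) (b:=b) ha hb; exact: ok_fix. Qed.
Lemma ok_TS a b : (a < 8)%N -> (b < 8)%N -> ok (YS a b) (embM 8 8 (TSc a b)).
Proof. by move=> ha hb; have [_ h2] := chk_Lie_nth (a:=a) (b:=b) ha hb; exact: ok_fix. Qed.

Lemma VrowsE : Vrows R = W^T.
Proof.
apply/matrixP => i j; rewrite !mxE VlistE (nth_map [::]) //.
by rewrite !mxE ent_mkm.
Qed.

Lemma inV_W v : inV v -> exists u : 'cV[C]_8, v = W *m u.
Proof.
rewrite /inV VrowsE => /submxP [D HD].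
by exists D^T; rewrite -[v]trmxK HD trmx_mul trmxK.
Qed.

Lemma inV_colW c : inV (col c W).
Proof. by rewrite /inV VrowsE tr_col row_sub. Qed.

Definition Dd : 'M[C]_8 := embM 8 8 Dc.
Definition P : 'M[C]_27 := (gC twelve)^-1 *: (W *m Dd *m adjmx W).

Lemma PW : P *m W = W.
Proof.
have := chk_P_ok; rewrite /chk_P => /eqP E0.
have E : W *m Dd *m (adjmx W *m W) = gC twelve *: W.
  rewrite /W /Dd -embM_adj -!embM_mul -embM_scale.
  exact: (congr1 (embM 27 8) E0).
rewrite /P.
rewrite -scalemxAl.
rewrite -(mulmxA _ (adjmx W)).
rewrite E.
rewrite scalerA.
rewrite mulVf; first by rewrite scale1r.
by rewrite gC_twelve pnatr_eq0.
Qed.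

Lemma PV v : inV v -> P *m v = v.
Proof. by case/inV_W => u ->; rewrite mulmxA PW. Qed.

Lemma colsP (A B : 'M[C]_(27, 8)) : (forall j, col j A = col j B) -> A = B.
Proof. by move=> h; apply: trmx_inj; apply/row_matrixP => j; rewrite -!tr_col h. Qed.

Lemma col_mulmx m n p (A : 'M[C]_(m, n)) (B : 'M[C]_(n, p)) j :
  col j (A *m B) = A *m col j B.
Proof. by rewrite !colE mulmxA. Qed.

Lemma adjmx_mul m n p (A : 'M[C]_(m, n)) (B : 'M[C]_(n, p)) :
  adjmx (A *m B) = adjmx B *m adjmx A.
Proof. by rewrite /adjmx map_mxM trmx_mul. Qed.
Lemma adjmxK m n (A : 'M[C]_(m, n)) : adjmx (adjmx A) = A.
Proof.
by apply/matrixP => i j; rewrite !mxE; exact: conjCK.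
Qed.
Lemma adjmxN m n (A : 'M[C]_(m, n)) : adjmx (- A) = - adjmx A.
Proof. by apply/matrixP => i j; rewrite !mxE rmorphN. Qed.
End Abs3.


Section Abs4.
Variable R : realType.
Local Notation C := (R[i]).
Local Notation embM := (@embM R).
Local Notation gC := (@gC R).
Local Notation Lalg := (@Lalg R).
Local Notation W := (@W R).
Local Notation ok := (@ok R).

Lemma sum_if1 (F : 'I_8 -> C) (r : 'I_8) :
  \sum_(k < 8) (if (r == k :> nat) then F k else 0) = F r.
Proof.
rewrite (bigD1 r) //= eqxx big1 ?addr0 // => k hk.
by rewrite (_ : (r == k :> nat) = false) //; apply/negbTE; rewrite eq_sym.
Qed.

Lemma sum_if2 (F : 'I_8 -> 'I_8 -> C) (r c : 'I_8) :
  \sum_(a < 8) \sum_(b < 8) (if (r == a :> nat) && (c == b :> nat) then F a b else 0)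
  = F r c.
Proof.
rewrite -(sum_if1 (fun a => F a c) r); apply: eq_bigr => a _.
case: (r == a :> nat) => /=; last by rewrite big1.
exact: sum_if1.
Qed.

Lemma gC_i z : gC (Z0, z) = 'i * gC (z, Z0).
Proof. by rewrite /gC zR0 (_ : 'i = Complex 0 1) //; simpc. Qed.

Lemma realC (r : R) : (r%:C)%C \is Num.real.
Proof. by rewrite complex_real. Qed.

Definition cA (x : 'M[C]_8) (a b : 'I_8) : C := ((@complex.Re R (x a b) / 24%:R)%:C)%C.
Definition cS (x : 'M[C]_8) (a b : 'I_8) : C := ((@complex.Im R (x a b) / 24%:R)%:C)%C.

Lemma decomp (x : 'M[C]_8) : adjmx x = - x ->
  (gC twelve)^-1 *: (Dd R *m x) =
  \sum_(a < 8) \sum_(b < 8) (cA x a b *: embM 8 8 (TAc a b) + cS x a b *: embM 8 8 (TSc a b)).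
Proof.
move=> hx; apply/matrixP => r c.
have hr := ltn_ord r; have hc := ltn_ord c.
rewrite mxE summxE.
transitivity ((gC twelve)^-1 * (gC (dZ r, Z0) * x r c)).
  congr (_ * _); rewrite mxE -(sum_if1 (fun k => gC (dZ r, Z0) * x k c) r).
  apply: eq_bigr => k _; rewrite /Dd embME ent_mkm //.
  by case: ifP => _; rewrite ?gC0 ?mul0r.
rewrite (eq_bigr (fun a : 'I_8 => \sum_(b < 8) (if (r == a :> nat) && (c == b :> nat) then cA x a b * gC (dZ a, Z0) + cS x a b * gC (Z0, dZ a) else 0) + \sum_(b < 8) (if (r == b :> nat) && (c == a :> nat) then - (cA x a b * gC (dZ b, Z0)) + cS x a b * gC (Z0, dZ b) else 0))); last first.
  move=> a _; rewrite summxE.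
  rewrite (eq_bigr (fun b : 'I_8 => (if (r == a :> nat) && (c == b :> nat) then cA x a b * gC (dZ a, Z0) + cS x a b * gC (Z0, dZ a) else 0) + (if (r == b :> nat) && (c == a :> nat) then - (cA x a b * gC (dZ b, Z0)) + cS x a b * gC (Z0, dZ b) else 0))).
    by rewrite big_split.
  move=> b _.
  rewrite !mxE !ent_mkm // !gC_add gC_opp !(fun_if gC).
  by case: ifP => _; case: ifP => _; rewrite ?gC0; ring.
rewrite big_split /= sum_if2 exchange_big /= sum_if2.
have hcr : x c r = - Num.conj (x r c).
  have := congr1 (fun A : 'M[C]_8 => A c r) hx; rewrite !mxE /= => ->; by rewrite opprK.
rewrite /cA /cS hcr !gC_i gC_twelve.
case: (x r c) => p q.
have -> : complex.Re (- Num.conj (Complex p q)) = - p by [].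
have -> : complex.Im (- Num.conj (Complex p q)) = q by rewrite /= opprK.
have -> : (Complex p q) = (p%:C)%C + 'i * (q%:C)%C by rewrite [LHS]complexE.
rewrite /= !rmorphM !fmorphV !rmorphN !rmorph_nat.
by field.
Qed.
End Abs4.



Theorem proposition6p3 (R : realType) (X : 'M[R[i]]_27) :
  adjmx X = - X -> \tr X = 0 ->
  (forall v, inV v -> inV (X *m v)) ->
  (forall w, orthV w -> X *m w = 0) ->
  exists Y, Lalg Y /\ (forall v, inV v -> Y *m v = X *m v).
Proof.
move=> hX _ hV _.
pose x := adjmx (W R) *m X *m W R.
have hx : adjmx x = - x.
  by rewrite /x !adjmx_mul adjmxK hX mulNmx mulmxN mulmxA.
pose M := (gC R twelve)^-1 *: (Dd R *m x).
have hXW : X *m W R = W R *m M.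
  have -> : W R *m M = P R *m (X *m W R).
    by rewrite /M /P /x -scalemxAr -scalemxAl !mulmxA.
  apply/esym/colsP => j; rewrite !col_mulmx; apply: PV; apply: hV; exact: inV_colW.
pose Y := \sum_(a < 8) \sum_(b < 8) (@cA R x a b *: YA R a b + @cS R x a b *: YS R a b).
have okY : ok R Y M.
  rewrite /M decomp //; apply: ok_sum => a _; apply: ok_sum => b _.
  apply: okD; apply: okZ; rewrite ?realC //.
    exact: ok_TA.
  exact: ok_TS.
exists Y; split; first exact: okY.1.
by move=> v /inV_W [u ->]; rewrite !mulmxA okY.2 hXW.
Qed.
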